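(* Let $\bm D\in\mathbb R^{n\times d}$ ($n\le d$) satisfy $\bm D\bm D^\top=\bm I_n$, let $\bar{\bm D}\in\mathbb R^{(d-n)\times d}$ satisfy $\bar{\bm D}\bm D^\top=\bm 0$, $\bar{\bm D}\bar{\bm D}^\top=\bm I_{d-n}$, and let $\bm A\in\mathbb R^{m\times n}$. Let $s_1,s_2$ be positive integers with $s_1,s_2\le n$ and let $\eta>0$. Suppose $\bm u,\bm v\in\mathbb R^d$ satisfy $\mathrm{supp}(\bm u)\cap\mathrm{supp}(\bm v)=\emptyset$, $\bm u$ is $s_1$-sparse, $\|\bm v\|_1-\|\bm v\|_2\le(s_2-\sqrt{s_2})\eta$ and $\|\bm v\|_\infty\le\eta$. Then $$|\langle\bm A\bm D\bm u,\bm A\bm D\bm v\rangle+\langle\bar{\bm D}\bm u,\bar{\bm D}\bm v\rangle|\le\Big(1+\frac{\sqrt2}{2}\Big)\eta\sqrt{s_2}\,\theta_{s_1,s_2}\|\bm u\|_2.$$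
   Context: A vector is $s$-sparse if it has at most $s$ nonzero entries; $\mathrm{supp}(\bm v)$ is the set of indices of nonzero entries. The $\bm D$-restricted orthogonality constant $\theta_{s,t}$ (for $\bm A$ and $\bm D$) is the smallest nonnegative number such that $|\langle\bm A\bm D\bm u,\bm A\bm D\bm v\rangle-\langle\bm D\bm u,\bm D\bm v\rangle|\le\theta_{s,t}\|\bm u\|_2\|\bm v\|_2$ for all $s$-sparse $\bm u\in\mathbb R^d$ and $t$-sparse $\bm v\in\mathbb R^d$. *)

(* Defs.v *)
From HB Require Import structures.
From mathcomp Require Import all_boot all_order all_algebra.
From mathcomp Require Import boolp classical_sets reals.
Set Implicit Arguments. Unset Strict Implicit. Unset Printing Implicit Defensive.
Import Order.TTheory GRing.Theory Num.Theory.
Local Open Scope ring_scope.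
Local Open Scope classical_set_scope.

Section Defs.
Variable R : realType.

Definition dotv (k : nat) (x y : 'cV[R]_k) : R := \sum_(i < k) x i 0 * y i 0.
Definition norm2 (k : nat) (x : 'cV[R]_k) : R := Num.sqrt (\sum_(i < k) x i 0 ^+ 2).
Definition norm1 (k : nat) (x : 'cV[R]_k) : R := \sum_(i < k) `|x i 0|.
Definition normInf (k : nat) (x : 'cV[R]_k) : R := \big[Num.max/0]_(i < k) `|x i 0|.

Definition supp (k : nat) (x : 'cV[R]_k) : {set 'I_k} := [set i | x i 0 != 0].
Definition sparse (k s : nat) (x : 'cV[R]_k) : Prop := (#|supp x| <= s)%N.

(* D-restricted orthogonality constant theta_{s,t}: the smallest nonnegative
   number c with |<ADu,ADv> - <Du,Dv>| <= c ||u||_2 ||v||_2 for all s-sparse u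
   and t-sparse v in R^d; rendered as the infimum of the set of such c. *)
Definition ROC_bound (m n d : nat) (A : 'M[R]_(m, n)) (D : 'M[R]_(n, d))
    (s t : nat) (c : R) : Prop :=
  0 <= c /\ forall u v : 'cV[R]_d, sparse s u -> sparse t v ->
    `| dotv (A *m (D *m u)) (A *m (D *m v)) - dotv (D *m u) (D *m v) |
      <= c * norm2 u * norm2 v.

Definition theta (m n d : nat) (A : 'M[R]_(m, n)) (D : 'M[R]_(n, d))
    (s t : nat) : R := inf [set c : R | ROC_bound A D s t c].

End Defs.

(* Main.v *)
Require Import Defs.
From HB Require Import structures.
From mathcomp Require Import all_boot all_order all_algebra.
From mathcomp Require Import boolp classical_sets reals.
From mathcomp Require Import ring lra.
Import Order.TTheory GRing.Theory Num.Theory.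
Local Open Scope ring_scope.
Set Implicit Arguments. Unset Strict Implicit.

Section Helpers.
Variable R : realType.

Lemma dotvE k (x y : 'cV[R]_k) : dotv x y = (x^T *m y) 0 0.
Proof. by rewrite /dotv !mxE; apply: eq_bigr => i _; rewrite !mxE. Qed.

Lemma norm2_ge0 k (x : 'cV[R]_k) : 0 <= norm2 x.
Proof. exact: sqrtr_ge0. Qed.

Lemma normInf_ge0 k (x : 'cV[R]_k) : 0 <= normInf x.
Proof. rewrite /normInf; elim/big_ind: _ => // a b ha hb; rewrite le_max ha //. Qed.

Lemma le_normInf k (x : 'cV[R]_k) i : `|x i 0| <= normInf x.
Proof.
rewrite /normInf (bigD1 i) //= le_max lexx //.
Qed.

Lemma normInf_le k (x : 'cV[R]_k) b : 0 <= b -> (forall i, `|x i 0| <= b) -> normInf x <= b.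
Proof. move=> b0 h; rewrite /normInf; elim/big_ind: _ => // a c ha hc; by rewrite ge_max ha hc. Qed.

Lemma norm1_ge0 k (x : 'cV[R]_k) : 0 <= norm1 x.
Proof. by apply: sumr_ge0 => i _. Qed.

Lemma le_norm2 k (x : 'cV[R]_k) i : `|x i 0| <= norm2 x.
Proof.
rewrite /norm2 -sqrtr_sqr ler_sqrt; last by apply: sumr_ge0 => j _; rewrite sqr_ge0.
by rewrite (bigD1 i) //= lerDl; apply: sumr_ge0 => j _; rewrite sqr_ge0.
Qed.


Lemma alg (s : nat) (S1 S2 A m : R) : (0 < s)%N -> 0 <= m -> m <= A -> 0 <= S1 ->
  S2 <= (A + m) * S1 - s%:R * A * m ->
  Num.sqrt S2 + Num.sqrt s%:R / 2 * m <= S1 / Num.sqrt s%:R + Num.sqrt s%:R / 2 * A.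
Proof.
move=> s0 m0 mA S10 hS.
set r := Num.sqrt s%:R.
have r0 : 0 < r by rewrite sqrtr_gt0 ltr0n.
have rr : s%:R = r ^+ 2 by rewrite sqr_sqrtr // ler0n.
rewrite rr in hS.
set t := S1 / r.
have S1t : S1 = t * r by rewrite /t mulfVK // gt_eqF.
have t0 : 0 <= t by rewrite /t divr_ge0 // ltW.
rewrite S1t in hS.
suff : Num.sqrt S2 <= t + r / 2 * (A - m) by move=> h; rewrite -/t; lra.
have y0 : 0 <= t + r / 2 * (A - m).
  by apply: addr_ge0 => //; apply: mulr_ge0; [apply: divr_ge0; [exact: ltW|] | rewrite subr_ge0].
rewrite -(ger0_norm y0) -sqrtr_sqr ler_sqrt; last by rewrite sqr_ge0.
apply: (le_trans hS).
have h1 : 0 <= (t - m * r) ^+ 2 by rewrite sqr_ge0.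
have h2 : 0 <= r ^+ 2 * m * (A - m) by rewrite mulr_ge0 ?subr_ge0 // mulr_ge0 // sqr_ge0.
have h3 : 0 <= r ^+ 2 * (A - m) ^+ 2 / 4 by rewrite divr_ge0 // mulr_ge0 // sqr_ge0.
have -> : (t + r / 2 * (A - m)) ^+ 2 = t ^+ 2 + t * r * (A - m) + r ^+ 2 * (A - m) ^+ 2 / 4 by field.
have : (A + m) * (t * r) - r ^+ 2 * A * m = t ^+ 2 + t * r * (A - m) + r ^+ 2 * (A - m) ^+ 2 / 4
   - ((t - m * r) ^+ 2 + r ^+ 2 * m * (A - m) + r ^+ 2 * (A - m) ^+ 2 / 4) by field.
move=> ->; lra.
Qed.

Lemma sum_sq_bound k (T : {set 'I_k}) (a : 'I_k -> R) A m :
  (forall i, i \in T -> m <= a i <= A) ->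
  \sum_(i in T) a i ^+ 2 <= (A + m) * \sum_(i in T) a i - #|T|%:R * A * m.
Proof.
move=> h.
have : 0 <= \sum_(i in T) ((A + m) * a i - A * m - a i ^+ 2).
  apply: sumr_ge0 => i /h /andP [h1 h2].
  have -> : (A + m) * a i - A * m - a i ^+ 2 = (a i - m) * (A - a i) by ring.
  by apply: mulr_ge0; rewrite subr_ge0.
rewrite !sumrB -mulr_sumr sumr_const -mulr_natl; lra.
Qed.

Definition restr k (T : {set 'I_k}) (x : 'cV[R]_k) : 'cV[R]_k :=
  \col_i (if i \in T then x i 0 else 0).
Arguments restr {k}.

Lemma dotv_split k (g x : 'cV[R]_k) (T : {set 'I_k}) :
  dotv g x = dotv g (restr T x) + dotv g (restr (~: T) x).
Proof.
rewrite /dotv -big_split; apply: eq_bigr => i _; rewrite !mxE inE.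
by case: (i \in T) => /=; rewrite ?mulr0 ?addr0 ?add0r.
Qed.

Lemma norm1_split k (x : 'cV[R]_k) (T : {set 'I_k}) :
  norm1 x = norm1 (restr T x) + norm1 (restr (~: T) x).
Proof.
rewrite /norm1 -big_split; apply: eq_bigr => i _; rewrite !mxE inE.
by case: (i \in T) => /=; rewrite normr0 ?addr0 ?add0r.
Qed.

Lemma norm1_restr k (x : 'cV[R]_k) (T : {set 'I_k}) : norm1 (restr T x) = \sum_(i in T) `|x i 0|.
Proof.
rewrite /norm1 [RHS]big_mkcond; apply: eq_bigr => i _; rewrite !mxE.
by case: (i \in T); rewrite ?normr0.
Qed.

Lemma norm2_restr k (x : 'cV[R]_k) (T : {set 'I_k}) :
  norm2 (restr T x) = Num.sqrt (\sum_(i in T) `|x i 0| ^+ 2).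
Proof.
rewrite /norm2 [in RHS]big_mkcond /=; congr (Num.sqrt _); apply: eq_bigr => i _; rewrite !mxE.
by case: (i \in T); rewrite ?expr0n ?real_normK ?num_real.
Qed.

Lemma supp_restr k (x : 'cV[R]_k) (T : {set 'I_k}) : supp (restr T x) = supp x :&: T.
Proof.
by apply/setP => i; rewrite !inE !mxE; case: (i \in T); rewrite ?eqxx ?andbT ?andbF.
Qed.


Lemma key k s (g : 'cV[R]_k) (K : R) : (0 < s)%N -> 0 <= K ->
  (forall w, sparse s w -> `|dotv g w| <= K * norm2 w) ->
  forall x, `|dotv g x| <= K * (norm1 x / Num.sqrt s%:R + Num.sqrt s%:R / 2 * normInf x).
Proof.
move=> s0 K0 H x.
have [N] := ubnP #|supp x|; elim: N x => // N IH x /ltnSE hN.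
case: (leqP #|supp x| s) => hs.
  apply: (le_trans (H x hs)); apply: ler_wpM2l => //.
  have := @alg s (norm1 x) (\sum_(i < k) x i 0 ^+ 2) (normInf x) 0 s0 (lexx _)
    (normInf_ge0 x) (norm1_ge0 x).
  rewrite !mulr0 !addr0 subr0 /norm2. apply.
  rewrite /norm1 mulr_sumr; apply: ler_sum => i _.
  rewrite -real_normK ?num_real // expr2; apply: ler_wpM2r => //; exact: le_normInf.
pose P (T : {set 'I_k}) := (T \subset supp x) && (#|T| <= s)%N.
pose F (T : {set 'I_k}) := \sum_(i in T) `|x i 0|.
have P0 : P finset.set0 by rewrite /P finset.sub0set cards0.
case: (arg_maxP F P0) => T PT maxT.
case/andP: PT => Tsub Tcard.
have ex : forall i j, i \in T -> j \notin T -> `|x j 0| <= `|x i 0|.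
  move=> i j iT jT; rewrite leNgt; apply/negP => lt.
  have jsupp : j \in supp x.
    rewrite inE -normr_gt0; apply: le_lt_trans lt; exact: normr_ge0.
  have jTi : j \notin T :\ i by rewrite in_setD1 negb_and jT orbT.
  have PT' : P (j |: (T :\ i)).
    rewrite /P finset.subUset finset.sub1set jsupp /=; apply/andP; split.
      exact: fintype.subset_trans (finset.subsetDl _ _) Tsub.
    by move: Tcard; rewrite (cardsD1 i T) iT cardsU1 jTi.
  have := maxT _ PT'; rewrite /F big_setU1 //= (big_setD1 _ iT) /=; lra.
have Tc : #|T| = s.
  apply/eqP; rewrite eqn_leq Tcard /=; rewrite leqNgt; apply/negP => lt.
  have : supp x \subset T.
    apply/fintype.subsetP => j js; apply/negPn/negP => jT.
    have PT' : P (j |: T) by rewrite /P finset.subUset finset.sub1set js Tsub cardsU1 jT add1n.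
    have := maxT _ PT'; rewrite /F big_setU1 //= -/(F T).
    have : 0 < `|x j 0| by rewrite normr_gt0; move: js; rewrite inE.
    lra.
  move/subset_leq_card => h; have := leq_ltn_trans h lt; rewrite ltnNge ltnW //.
set y := restr T x; set z := restr (~: T) x.
have suppz : (#|supp z| < #|supp x|)%N.
  rewrite /z supp_restr -finset.setDE -(cardsID T (supp x)) (finset.setIidPr Tsub) Tc.
  by rewrite -addn1 addnC leq_add2r.
have IHz := IH z (leq_trans suppz hN).
set m := normInf z.
have m0 : 0 <= m := normInf_ge0 z.
have mT : forall i, i \in T -> m <= `|x i 0|.
  move=> i iT; apply: normInf_le => // j; rewrite /z mxE inE.
  case: ifP => jT; last by rewrite normr0.
  by apply: ex.
have ys : sparse s y by rewrite /sparse /y supp_restr (finset.setIidPr Tsub) Tc.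
have Hy := H y ys.
have halg := @alg s (norm1 y) (\sum_(i in T) `|x i 0| ^+ 2) (normInf x) m s0 m0.
have ma : m <= normInf x.
  case: (finset.set_0Vmem T) => [T0|[i iT]].
    by move: Tc s0; rewrite T0 cards0 => <-.
  exact: le_trans (mT i iT) (le_normInf x i).
have := halg ma (norm1_ge0 y).
rewrite norm1_restr -norm2_restr -/y.
have hb : forall i, i \in T -> m <= `|x i 0| <= normInf x.
  by move=> i iT; rewrite mT // le_normInf.
rewrite -Tc; move/(_ (sum_sq_bound hb)) => hfin.
rewrite Tc in hfin *.
rewrite (dotv_split g x T) (norm1_split x T) -/y -/z norm1_restr.
set r := Num.sqrt s%:R in hfin IHz *.
set S1 := \sum_(i in T) `|x i 0| in hfin *.
apply: (le_trans (ler_normD _ _)).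
apply: (le_trans (lerD Hy IHz)).
rewrite -mulrDr; apply: ler_wpM2l => //.
rewrite mulrDl; rewrite /m in hfin; lra.
Qed.


Lemma ortho k d (Q : 'M[R]_(k, d)) : k = d -> Q *m Q^T = 1%:M -> Q^T *m Q = 1%:M.
Proof. move=> e; subst k; exact: mulmx1C. Qed.

Lemma complete n d (D : 'M[R]_(n, d)) (Dbar : 'M[R]_(d - n, d)) :
  (n <= d)%N -> D *m D^T = 1%:M -> Dbar *m D^T = 0 -> Dbar *m Dbar^T = 1%:M ->
  D^T *m D + Dbar^T *m Dbar = 1%:M.
Proof.
move=> nd h1 h2 h3.
have := @ortho _ _ (col_mx D Dbar) (subnKC nd).
rewrite tr_col_mx mul_row_col; apply.
have h4 : D *m Dbar^T = 0 by rewrite -[D]trmxK -trmx_mul h2 trmx0.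
by rewrite mul_col_row h1 h2 h3 h4 -scalar_mx_block.
Qed.

Lemma dotv_sum_split n d (D : 'M[R]_(n, d)) (Dbar : 'M[R]_(d - n, d)) (u v : 'cV[R]_d) :
  D^T *m D + Dbar^T *m Dbar = 1%:M ->
  dotv (D *m u) (D *m v) + dotv (Dbar *m u) (Dbar *m v) = dotv u v.
Proof.
move=> h.
have E : u^T *m (D^T *m D) *m v + u^T *m (Dbar^T *m Dbar) *m v = u^T *m v.
  by rewrite -mulmxDl -mulmxDr h mulmx1.
rewrite !dotvE -E !trmx_mul !mulmxA.
by rewrite [in RHS]mxE.
Qed.

Lemma dotv_disj k (u v : 'cV[R]_k) : [disjoint supp u & supp v] -> dotv u v = 0.
Proof.
move=> hd; rewrite /dotv big1 // => i _.
case: (boolP (i \in supp u)) => hi.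
  have := disjointFr hd hi; rewrite inE => /negbFE/eqP ->; exact: mulr0.
by move: hi; rewrite inE negbK => /eqP ->; rewrite mul0r.
Qed.

Lemma dotv_g m n d (A : 'M[R]_(m, n)) (D : 'M[R]_(n, d)) (u w : 'cV[R]_d) :
  dotv (A *m (D *m u)) (A *m (D *m w)) - dotv (D *m u) (D *m w) =
  dotv ((A *m D)^T *m (A *m (D *m u)) - D^T *m (D *m u)) w.
Proof.
have lin : forall (a b : 'cV[R]_d), dotv (a - b) w = dotv a w - dotv b w.
  by move=> a b; rewrite /dotv -sumrB; apply: eq_bigr => i _; rewrite !mxE mulrBl.
by rewrite lin !dotvE !trmx_mul !trmxK !mulmxA.
Qed.

Lemma bilin_bound k (G : 'M[R]_k) (x y : 'cV[R]_k) :
  `|(x^T *m G *m y) 0 0| <= (\sum_j \sum_i `|G i j|) * norm2 x * norm2 y.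
Proof.
rewrite mxE mulr_suml mulr_suml; apply: (le_trans (ler_norm_sum _ _ _)); apply: ler_sum => j _.
rewrite mxE normrM mulr_suml mulr_suml.
apply: (le_trans (ler_wpM2r (normr_ge0 _) (ler_norm_sum _ _ _))).
rewrite mulr_suml; apply: ler_sum => i _; rewrite !mxE normrM.
have hx := le_norm2 x i; have hy := le_norm2 y j.
have -> : `|x i 0| * `|G i j| * `|y j 0| = `|G i j| * (`|x i 0| * `|y j 0|) by ring.
rewrite -mulrA; apply: ler_wpM2l => //.
by apply: ler_pM => //; exact: normr_ge0.
Qed.


Lemma l1_bound (s : nat) (eta S1 N2 Ainf : R) : (0 < s)%N -> 0 < eta ->
  0 <= N2 -> 0 <= S1 -> N2 ^+ 2 <= Ainf * S1 -> Ainf <= eta ->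
  S1 - N2 <= (s%:R - Num.sqrt s%:R) * eta -> S1 <= s%:R * eta.
Proof.
move=> s0 e0 N20 S10 hN hA h.
set r := Num.sqrt s%:R in h *.
have r1 : 1 <= r by rewrite -sqrtr1 ler_sqrt ?ler0n // ler1n.
have rr : s%:R = r ^+ 2 by rewrite sqr_sqrtr // ler0n.
rewrite rr in h *.
set q := Num.sqrt (eta * S1).
have q0 : 0 <= q := sqrtr_ge0 _.
have qq : q ^+ 2 = eta * S1 by rewrite sqr_sqrtr // mulr_ge0 // ltW.
have Nq : N2 <= q.
  have hh : N2 ^+ 2 <= eta * S1 by apply: (le_trans hN); exact: ler_wpM2r.
  rewrite -(ger0_norm N20) -sqrtr_sqr ler_sqrt //.
  by rewrite mulr_ge0 // ltW.
have h' : q ^+ 2 - q * eta <= (r ^+ 2 - r) * eta ^+ 2.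
  have : (S1 - q) * eta <= (r ^+ 2 - r) * eta * eta.
    by apply: ler_wpM2r; [exact: ltW | lra].
  rewrite mulrBl (mulrC S1) -qq; move=> hh; rewrite expr2; lra.
have qr : q <= r * eta.
  rewrite leNgt; apply/negP => lt.
  have : 0 < (q - r * eta) * (q + r * eta - eta).
    apply: mulr_gt0; first lra.
    have : 0 <= (r - 1) * eta by apply: mulr_ge0; [lra | exact: ltW].
    have : 0 < r * eta by apply: mulr_gt0; [lra | done].
    lra.
  have -> : (q - r * eta) * (q + r * eta - eta) = q ^+ 2 - q * eta - (r ^+ 2 - r) * eta ^+ 2 by ring.
  lra.
have : eta * S1 <= eta * (r ^+ 2 * eta).
  rewrite -qq; have -> : eta * (r ^+ 2 * eta) = (r * eta) ^+ 2 by ring.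
  by rewrite ler_pXn2r // ?nnegrE // mulr_ge0 //; [lra | exact: ltW].
by rewrite ler_pM2l.
Qed.


Lemma norm2_sq_le k (x : 'cV[R]_k) : norm2 x ^+ 2 <= normInf x * norm1 x.
Proof.
rewrite /norm2 sqr_sqrtr; last by apply: sumr_ge0 => i _; rewrite sqr_ge0.
rewrite /norm1 mulr_sumr; apply: ler_sum => i _.
rewrite -real_normK ?num_real // expr2; apply: ler_wpM2r => //; exact: le_normInf.
Qed.

Lemma roc_nonempty m n d (A : 'M[R]_(m, n)) (D : 'M[R]_(n, d)) s t :
  exists c, ROC_bound A D s t c.
Proof.
set G := (A *m D)^T *m (A *m D) - D^T *m D.
exists (\sum_j \sum_i `|G^T i j|); split.
  by apply: sumr_ge0 => j _; apply: sumr_ge0 => i _.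
move=> u w _ _; rewrite dotv_g dotvE.
have -> : (A *m D)^T *m (A *m (D *m u)) - D^T *m (D *m u) = G *m u.
  by rewrite /G mulmxBl !mulmxA.
rewrite trmx_mul; exact: bilin_bound.
Qed.

End Helpers.

Theorem proposition2 (R : realType) (m n d : nat)
  (D : 'M[R]_(n, d)) (Dbar : 'M[R]_(d - n, d)) (A : 'M[R]_(m, n))
  (s1 s2 : nat) (eta : R) (u v : 'cV[R]_d) :
  (n <= d)%N ->
  D *m D^T = 1%:M ->
  Dbar *m D^T = 0 ->
  Dbar *m Dbar^T = 1%:M ->
  (0 < s1)%N -> (0 < s2)%N -> (s1 <= n)%N -> (s2 <= n)%N ->
  0 < eta ->
  [disjoint supp u & supp v] ->
  sparse s1 u ->
  norm1 v - norm2 v <= (s2%:R - Num.sqrt s2%:R) * eta ->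
  normInf v <= eta ->
  `| dotv (A *m (D *m u)) (A *m (D *m v)) + dotv (Dbar *m u) (Dbar *m v) |
    <= (1 + Num.sqrt 2 / 2) * eta * Num.sqrt s2%:R * theta A D s1 s2 * norm2 u.
Proof.
move=> hnd hDD hDbD hDbDb s10 s20 s1n s2n eta0 hdisj hu h1 hinf.
set g := (A *m D)^T *m (A *m (D *m u)) - D^T *m (D *m u).
have hL : dotv (A *m (D *m u)) (A *m (D *m v)) + dotv (Dbar *m u) (Dbar *m v) = dotv g v.
  have hs := dotv_sum_split u v (complete hnd hDD hDbD hDbDb).
  rewrite (dotv_disj hdisj) in hs.
  rewrite -dotv_g; lra.
rewrite hL.
set r := Num.sqrt s2%:R.
have r0 : 0 < r by rewrite sqrtr_gt0 ltr0n.
have rr : s2%:R = r ^+ 2 by rewrite sqr_sqrtr // ler0n.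
have S1b : norm1 v <= s2%:R * eta.
  apply: (l1_bound s20 eta0 (norm2_ge0 v) (norm1_ge0 v) (norm2_sq_le v) hinf h1).
have sq2 : 1 <= Num.sqrt 2 :> R.
  by rewrite -[X in X <= _]sqrtr1 ler_sqrt //; lra.
set Coef := (1 + Num.sqrt 2 / 2) * eta * r * norm2 u.
have Coef0 : 0 <= Coef.
  rewrite /Coef !mulr_ge0 ?norm2_ge0 ?ltW //; lra.
have bound : forall c, ROC_bound A D s1 s2 c -> `|dotv g v| <= c * Coef.
  move=> c [c0 hc].
  have K0 : 0 <= c * norm2 u by rewrite mulr_ge0 ?norm2_ge0.
  have Hw : forall w, sparse s2 w -> `|dotv g w| <= c * norm2 u * norm2 w.
    by move=> w hw; rewrite -dotv_g; exact: hc.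
  apply: (le_trans (key s20 K0 Hw v)).
  have -> : c * Coef = c * norm2 u * ((1 + Num.sqrt 2 / 2) * eta * r) by rewrite /Coef; ring.
  apply: ler_wpM2l => //.
  have e1 : norm1 v / r <= r * eta.
    rewrite ler_pdivrMr // ; rewrite rr in S1b.
    by have -> : r * eta * r = r ^+ 2 * eta by ring.
  have e2 : r / 2 * normInf v <= r / 2 * eta.
    by apply: ler_wpM2l => //; rewrite divr_ge0 // ltW.
  have e3 : r * eta <= Num.sqrt 2 * (r * eta) by rewrite ler_peMl // mulr_ge0 // ltW.
  have -> : (1 + Num.sqrt 2 / 2) * eta * r = r * eta + (Num.sqrt 2 * (r * eta)) / 2 by field.
  rewrite -/r.
  lra.
have [c0 hc0] := roc_nonempty A D s1 s2.
have -> : (1 + Num.sqrt 2 / 2) * eta * r * theta A D s1 s2 * norm2 u = theta A D s1 s2 * Coef.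
  by rewrite /Coef; ring.
case: (ltrP 0 Coef) => hC; last first.
  have C0 : Coef = 0 by apply/eqP; rewrite eq_le hC Coef0.
  by have := bound _ hc0; rewrite C0 !mulr0.
rewrite -ler_pdivrMr //.
apply: lb_le_inf; first by exists c0.
by move=> c hc; rewrite ler_pdivrMr //; exact: bound.
Qed.
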